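(* Let $H$ be a graph and let $v_1,\dots,v_k$ be mutually distinct vertices of $H$. Then $\sigma=(v_1,\dots,v_k)$ is an lc-sequence for the set system $\mathcal{D}_H$ if and only if $\varphi=*_c v_1 *_c v_2\cdots *_c v_k$ is an lc-sequence for $H$. Moreover, in this case, $\sigma$ is full if and only if $\varphi$ is full.
   Context: Graphs are finite, may have loops, but no multiple edges. A vertex is isolated if no edge (including a loop) is incident to it. For $v\in V(H)$, $N_H(v)=\{u\neq v: \{u,v\}\in E(H)\}$. For a looped vertex $v$, the local complement $H*v$ is the graph on $V(H)$ such that for every $p\subseteq V(H)$ with $|p|\in\{1,2\}$: $p\in E(H*v)$ iff either ($p\notin E(H)$ and $p\subseteq N_H(v)$) or ($p\in E(H)$ and $p\not\subseteq N_H(v)$). $H*_c v$ (only for looped $v$) is obtained from $H*v$ by removing all edges incident to $v$, including its loop. $\varphi=*_c v_1\cdots *_c v_k$ (applied left to right) is an lc-sequence for $H$ if $v_i$ is looped in $H*_c v_1\cdots*_c v_{i-1}$ for every $i$; it is full if $H\varphi$ consists only of isolated vertices. The adjacency matrix $A(H)$ is over $GF(2)$ with diagonal entry $1$ exactly at looped vertices; $H[X]$ is the induced subgraph on $X$. $\mathcal{D}_H=(V(H),S)$ with $X\in S$ iff $A(H[X])$ is invertible (the empty matrix counts as invertible). For a set system $D=(V,S)$, a sequence $(v_1,\dots,v_k)$ of mutually distinct elements of $V$ is an lc-sequence for $D$ if $\{v_1,\dots,v_i\}\in S$ for all $i\in\{0,\dots,k\}$; it is full if moreover $\{v_1,\dots,v_k\}$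 is an inclusion-maximal element of $S$. *)

(* Defs.v *)
From HB Require Import structures.
From mathcomp Require Import all_boot all_order all_algebra.
Set Implicit Arguments. Unset Strict Implicit. Unset Printing Implicit Defensive.
Import GRing.Theory.

(* A graph (finite, loops allowed, no multiple edges) on vertex set V is a
   symmetric boolean relation e : rel V; e v v means v is looped.
   The edge {u,w} (|{u,w}| in {1,2}) is present iff e u w. *)

Section Graphs.
Variable V : finType.

Definition nbhd (e : rel V) (v : V) : pred V := fun u => (u != v) && e u v.

Definition lc (e : rel V) (v : V) : rel V :=
  fun u w => if nbhd e v u && nbhd e v w then ~~ e u w else e u w.

Definition lcc (e : rel V) (v : V) : rel V :=
  fun u w => [&& lc e v u w, u != v & w != v].

Definition lcc_seq (e : rel V) (s : seq V) : rel V := foldl lcc e s.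

Fixpoint lcseq_graph (e : rel V) (s : seq V) : bool :=
  if s is v :: s' then e v v && lcseq_graph (lcc e v) s' else true.

Definition all_isolated (e : rel V) : bool := [forall u, forall w, ~~ e u w].

Definition full_lcseq_graph (e : rel V) (s : seq V) : bool :=
  lcseq_graph e s && all_isolated (lcc_seq e s).

Definition adj_sub (e : rel V) (X : {set V}) : 'M['F_2]_#|X| :=
  \matrix_(i, j) ((e (enum_val i) (enum_val j))%:R)%R.

Definition DH (e : rel V) : {set {set V}} :=
  [set X : {set V} | adj_sub e X \in unitmx].

Definition lcseq_ss (S : {set {set V}}) (s : seq V) : bool :=
  uniq s && all (fun i => [set x in take i s] \in S) (iota 0 (size s).+1).

Definition full_lcseq_ss (S : {set {set V}}) (s : seq V) : bool :=
  lcseq_ss S s && maxset (fun X => X \in S) [set x in s].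

End Graphs.

(* Main.v *)
Require Import Defs.
From mathcomp Require Import all_boot all_order all_algebra.
Set Implicit Arguments. Unset Strict Implicit. Unset Printing Implicit Defensive.
Import GRing.Theory.
Local Open Scope ring_scope.

Lemma F2_self (a : 'F_2) : a + a = 0.
Proof. by case: a => [[|[|]]] //= Ha; apply/eqP. Qed.

Lemma F2_eq (a b : 'F_2) : a + b = 0 -> a = b.
Proof. by move=> H; rewrite -[b]add0r -H -addrA F2_self addr0. Qed.

Section S.
Variable V : finType.
Implicit Types (e : rel V) (X Y : {set V}).
Definition F e (u w : V) : 'F_2 := (e u w)%:R.

Lemma F_lcc e v u w : symmetric e -> u != v -> w != v ->
  F (lcc e v) u w = F e u w + F e u v * F e v w.
Proof.
move=> sym uv wv; rewrite /F /lcc /lc /nbhd uv wv /= (sym w v).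
by case: (e u v); case: (e v w); case: (e u w) => //=; apply/eqP.
Qed.
Definition kerNZ e X := exists x : V -> 'F_2,
  (exists2 u, u \in X & x u != 0) /\
  forall w, w \in X -> \sum_(u in X) x u * F e u w = 0.

Lemma schur e v X : symmetric e -> e v v -> v \notin X ->
  kerNZ e (v |: X) <-> kerNZ (lcc e v) X.
Proof.
move=> sym evv vX.
have Fvv : F e v v = 1 by rewrite /F evv.
have neqv u : u \in X -> u != v by apply: contraTneq => ->.
split.
- move=> [x [[u0 u0X xu0] Hx]].
  have Hv := Hx v (setU11 _ _); rewrite big_setU1 //= Fvv mulr1 in Hv.
  move/F2_eq: Hv => Hv.
  exists x; split.
    move: u0X; rewrite in_setU1 => /orP [/eqP eu0|]; last by exists u0.
    subst u0; move: xu0; rewrite Hv => xu0.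
    case: (pickP (fun u => (u \in X) && (x u != 0))) => [u /andP[]|H0]; first by exists u.
    move: xu0; rewrite big1 ?eqxx // => u uX.
    by move: (H0 u); rewrite uX /= => /negbFE/eqP ->; rewrite mul0r.
  move=> w wX; have := Hx w (setU1r _ wX); rewrite big_setU1 //= Hv.
  move=> H; apply: (etrans _ H); rewrite mulr_suml -big_split /=.
  by apply: eq_bigr => u uX; rewrite F_lcc ?neqv // mulrDr mulrA addrC.
- move=> [x [[u0 u0X xu0] Hx]].
  exists (fun u => if u == v then \sum_(u in X) x u * F e u v else x u); split.
    by exists u0; rewrite ?setU1r // (negbTE (neqv _ u0X)).
  have HX w : \sum_(u in X) (if u == v then \sum_(u in X) x u * F e u v else x u) * F e u w
      = \sum_(u in X) x u * F e u w.
    by apply: eq_bigr => u uX; rewrite (negbTE (neqv _ uX)).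
  move=> w; rewrite in_setU1 big_setU1 //= eqxx HX => /orP [/eqP ->|wX].
    by rewrite Fvv mulr1 F2_self.
  apply: (etrans _ (Hx w wX)); rewrite mulr_suml -big_split /=.
  by apply: eq_bigr => u uX; rewrite F_lcc ?neqv // mulrDr mulrA addrC.
Qed.

Lemma DH_ker e X : (X \in DH e) <-> ~ kerNZ e X.
Proof.
rewrite inE unitmxE unitfE; split.
- move=> /det0P H [x [[u uX xu] Hx]]; apply: H.
  exists (\row_i x (enum_val i)).
    apply/eqP=> /matrixP /(_ 0 (enum_rank_in uX u)); rewrite !mxE.
    by rewrite enum_rankK_in //; apply/eqP.
  apply/matrixP=> i j; rewrite !mxE.
  under eq_bigr do rewrite !mxE.
  have := Hx (enum_val j) (enum_valP j); rewrite big_enum_val => H.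
  by apply: (etrans _ H); apply: eq_bigr => k _.
- move=> H; apply/det0P=> [[v vn0 vA]]; apply: H.
  have [i vi] : exists i, v 0 i != 0.
    apply/existsP; apply: contraR vn0 => /existsPn H.
    by apply/eqP/matrixP=> a b; rewrite ord1 mxE; apply/eqP; rewrite -[_ == _]negbK H.
  have uX := enum_valP i.
  exists (fun u => v 0 (enum_rank_in uX u)); split.
    by exists (enum_val i) => //; rewrite enum_valK_in.
  move=> w wX; move/matrixP: vA => /(_ 0 (enum_rank_in uX w)); rewrite !mxE => H.
  rewrite big_enum_val; apply: (etrans _ H).
  apply: eq_bigr => k _; rewrite !mxE enum_valK_in enum_rankK_in //.
Qed.

Lemma DH_schur e v X : symmetric e -> e v v -> v \notin X ->
  ((v |: X) \in DH e) = (X \in DH (lcc e v)).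
Proof.
move=> sym evv vX; have [H1 H2] := schur sym evv vX.
apply/idP/idP => /DH_ker H; apply/DH_ker => K; apply: H; auto.
Qed.

Lemma DH_set0 e : set0 \in DH e.
Proof. by apply/DH_ker => [[x [[u]]]]; rewrite inE. Qed.

Lemma DH_set1 e v : ([set v] \in DH e) = e v v.
Proof.
apply/idP/idP.
- move/DH_ker => K; apply/negPn/negP => H; apply: K; exists (fun _ => 1); split.
    by exists v; rewrite ?inE.
  by move=> w; rewrite inE => /eqP ->; rewrite big_set1 /F (negbTE H) mulr0.
- move=> evv; apply/DH_ker => [[x [[u]]]]; rewrite inE => /eqP -> xv /(_ v).
  by rewrite inE eqxx big_set1 /F evv mulr1 => /(_ erefl) /eqP; apply/negP.
Qed.

Lemma DH_zero e Y : (forall u w, ~~ e u w) -> (Y \in DH e) = (Y == set0).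
Proof.
move=> H; apply/idP/idP; last by move/eqP ->; apply: DH_set0.
move/DH_ker => K; apply/eqP/setP => y; rewrite inE; apply/negP => yY; apply: K; exists (fun _ => 1); split.
  by exists y.
by move=> w _; apply: big1 => u _; rewrite /F (negbTE (H _ _)) mulr0.
Qed.

Lemma DH_pair e u w : u != w -> ~~ e u u -> ~~ e w w -> e u w -> e w u ->
  [set u; w] \in DH e.
Proof.
move=> uw euu eww euw ewu; apply/DH_ker => [[x [[z zX xz] Hx]]].
have uW : u \notin [set w] by rewrite inE.
have Hu := Hx u; have Hw := Hx w.
rewrite !inE eqxx /= in Hu Hw.
move: (Hu isT) (Hw (introT orP (or_intror (eqxx w)))); rewrite !big_setU1 //= !big_set1 /F.
rewrite (negbTE euu) (negbTE eww) euw ewu !mulr0 !mulr1 add0r addr0 => xw xu.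
by move: zX xz; rewrite !inE => /orP [] /eqP ->; rewrite ?xw ?xu eqxx.
Qed.

Lemma sym_lcc e v : symmetric e -> symmetric (lcc e v).
Proof.
move=> sym u w; rewrite /lcc; have -> : lc e v u w = lc e v w u by rewrite /lc sym andbC.
by case: (u != v); case: (w != v); rewrite /= ?andbF.
Qed.

Lemma sym_seq e s : symmetric e -> symmetric (lcc_seq e s).
Proof. by elim: s e => //= v s IH e sym; apply: IH; apply: sym_lcc. Qed.

Lemma iso_lcc e v u : (forall w, ~~ e u w) -> forall w, ~~ lcc e v u w.
Proof.
by move=> H w; rewrite /lcc /lc /nbhd (negbTE (H v)) andbF /= (negbTE (H w)).
Qed.

Lemma iso_seq e s u : (forall w, ~~ e u w) -> forall w, ~~ lcc_seq e s u w.
Proof. by elim: s e => //= v s IH e H; apply: IH; apply: iso_lcc. Qed.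

Lemma in_iso e s u : u \in s -> forall w, ~~ lcc_seq e s u w.
Proof.
elim: s e => //= v s IH e; rewrite inE => /orP [/eqP ->|us]; last exact: IH.
by apply: iso_seq => w; rewrite /lcc eqxx /= andbF.
Qed.

Lemma set_nil : [set x in ([::] : seq V)] = set0 :> {set V}.
Proof. by apply/setP => x; rewrite !inE. Qed.

Lemma set_cons' (v : V) t : [set x in v :: t] = v |: [set x in t].
Proof. by apply/setP => x; rewrite !inE. Qed.

Lemma allS n (P : pred nat) : all P (iota 0 n.+1) = P 0%N && all (fun i => P i.+1) (iota 0 n).
Proof. by rewrite /= (iotaDl 1 0) all_map. Qed.

Lemma lcseq_gen (S S' : {set {set V}}) v s b :
  uniq (v :: s) -> ([set x in [:: v]] \in S) = b -> set0 \in S -> set0 \in S' ->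
  (b -> forall i, ([set x in v :: take i s] \in S) = ([set x in take i s] \in S')) ->
  lcseq_ss S (v :: s) = b && lcseq_ss S' s.
Proof.
move=> Hu h1 S0 S'0 H; have us : uniq s by case/andP: Hu.
rewrite /lcseq_ss Hu us (allS (size s).+1) /= take0 set_nil S0 /=.
case: b h1 H => h1 H; rewrite h1 ?S'0 //=.
by apply: eq_all => i; rewrite H.
Qed.

Lemma lcseq_ss_cons e v s : symmetric e -> uniq (v :: s) ->
  lcseq_ss (DH e) (v :: s) = e v v && lcseq_ss (DH (lcc e v)) s.
Proof.
move=> sym Hu; have vs : v \notin s by case/andP: Hu.
apply: (@lcseq_gen (DH e) (DH (lcc e v)) v s (e v v) Hu).
- by rewrite set_cons' set_nil setU0 DH_set1.
- exact: DH_set0.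
- exact: DH_set0.
move=> evv i; rewrite set_cons' DH_schur //.
by rewrite inE; apply/negP => /mem_take; apply/negP.
Qed.

Lemma part1 e s : symmetric e -> uniq s -> lcseq_ss (DH e) s = lcseq_graph e s.
Proof.
elim: s e => [|v s IH] e sym us.
  by rewrite /lcseq_ss /= set_nil DH_set0.
rewrite lcseq_ss_cons //= IH //; last by case/andP: us.
exact: sym_lcc.
Qed.

Lemma DH_iter e s Y : symmetric e -> uniq s -> lcseq_graph e s ->
  (forall y, y \in Y -> y \notin s) ->
  ((Y :|: [set x in s]) \in DH e) = (Y \in DH (lcc_seq e s)).
Proof.
elim: s e Y => [|v s IH] e Y sym us Hg HY; first by rewrite set_nil setU0.
case/andP: us => vs us; case/andP: Hg => evv Hg.
have vYS : v \notin Y :|: [set x in s].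
  rewrite !inE negb_or; apply/andP; split; last by [].
  by apply/negP => /HY; rewrite inE eqxx.
have E : Y :|: [set x in v :: s] = v |: (Y :|: [set x in s]) by rewrite set_cons' setUCA.
rewrite E (DH_schur sym evv vYS).
have -> : lcc_seq e (v :: s) = lcc_seq (lcc e v) s by [].
apply: IH => //; first exact: sym_lcc.
by move=> y /HY; rewrite inE negb_or => /andP [].
Qed.

Lemma part2 e s : symmetric e -> uniq s -> lcseq_graph e s ->
  maxset (fun X => X \in DH e) [set x in s] = all_isolated (lcc_seq e s).
Proof.
move=> sym us Hg.
have symG := sym_seq s sym.
have key Y : (forall y, y \in Y -> y \notin s) ->
   ((Y :|: [set x in s]) \in DH e) = (Y \in DH (lcc_seq e s)) by move=> H; apply: DH_iter.
apply/maxsetP/idP.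
- move=> [PS maxS].
  have bad Y y : y \in Y -> (forall y, y \in Y -> y \notin s) -> Y \in DH (lcc_seq e s) -> False.
    move=> yY HY; rewrite -key // => /maxS /(_ (subsetUr _ _)) E.
    have := HY y yY; have : y \in Y :|: [set x in s] by rewrite inE yY.
    by rewrite E inE => ->.
  apply/forallP => u; apply/forallP => w; apply/negP => Guw.
  have us' : u \notin s by apply/negP => /(in_iso e) /(_ w); rewrite Guw.
  have ws' : w \notin s by apply/negP => /(in_iso e) /(_ u); rewrite symG Guw.
  case Guu: (lcc_seq e s u u).
    apply: (bad [set u] u); first by rewrite inE.
      by move=> y; rewrite inE => /eqP ->.
    by rewrite DH_set1.
  case Gww: (lcc_seq e s w w).
    apply: (bad [set w] w); first by rewrite inE.
      by move=> y; rewrite inE => /eqP ->.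
    by rewrite DH_set1.
  have uw : u != w by apply/eqP => E; rewrite E Gww in Guw.
  apply: (bad [set u; w] u); first by rewrite !inE eqxx.
    by move=> y; rewrite !inE => /orP [] /eqP ->.
  by apply: DH_pair; rewrite ?Guu ?Gww // symG.
- move=> /forallP iso.
  have isoG u w : ~~ lcc_seq e s u w by move: (iso u) => /forallP.
  split.
    by rewrite -[X in X \in _]set0U key ?DH_set0 // => y; rewrite inE.
  move=> B PB sSB.
  have HB : B = (B :\: [set x in s]) :|: [set x in s].
    apply/setP => x; rewrite !inE; case xs: (x \in s) => /=; rewrite ?orbT ?orbF ?andbT //.
    by apply: (subsetP sSB); rewrite inE.
  move: PB; rewrite HB key; last by move=> y; rewrite !inE => /andP [].
  by rewrite DH_zero // => /eqP ->; rewrite set0U.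
Qed.
End S.

Local Close Scope ring_scope.
Unset Implicit Arguments.

Theorem mainTheorem8 (V : finType) (e : rel V) (e_sym : symmetric e)
  (s : seq V) (s_uniq : uniq s) :
  (lcseq_ss (DH e) s = lcseq_graph e s) /\
  (lcseq_graph e s -> full_lcseq_ss (DH e) s = full_lcseq_graph e s).
Proof.
split; first exact: part1.
move=> Hg; rewrite /full_lcseq_ss /full_lcseq_graph part1 // Hg /=.
exact: part2.
Qed.
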